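(* Let $T$ be a tree rooted at $r$ with vertex set $V$. Let $V_1,V_2\subseteq V$ with $V_1\cap V_2=\emptyset$ and $|V_1|=|V_2|$, such that $V_1$ (resp. $V_2$) induces in $T$ a collection $\mathcal{P}_1$ (resp. $\mathcal{P}_2$) of vertex-disjoint paths, and suppose there is a bijection $\mathcal{P}_1\to\mathcal{P}_2$ mapping each path that starts at a vertex $v$ to a path of the same length that starts at a sibling of $v$. If every two distinct paths in $\mathcal{P}_1\cup\mathcal{P}_2$ are independent, then $V_1$ and $V_2$ are homometric sets of $T$.
   Context: Here a path in $\mathcal{P}_1\cup\mathcal{P}_2$ ''starts at'' the vertex of the path closest to the root (each such path runs downward from that vertex toward the leaves), and siblings are distinct vertices with the same parent. Two paths $P_1,P_2$ in $T$ are independent if there is no root-to-leaf path in $T$ that shares a vertex with both $P_1$ and $P_2$. The profile of a vertex set $V'$ is the multiset of distances in $T$ over all unordered pairs of distinct vertices of $V'$; two disjoint vertex sets are homometric if their profiles are equal. *)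

(* Defs.v *)
From mathcomp Require Import all_boot.
Set Implicit Arguments. Unset Strict Implicit. Unset Printing Implicit Defensive.

Section Tree.
Variables (T : finType) (e : rel T).

Definition is_tree : Prop :=
  [/\ symmetric e, irreflexive e,
      (forall x y : T, connect e x y) &
      (forall c : seq T, ucycle e c -> size c <= 2)].

Definition walk_len (n : nat) (x y : T) : bool :=
  [exists p : n.-tuple T, path e x p && (last x p == y)].

(* graph distance: least n with a walk of length n (always < #|T| when connected) *)
Definition dist (x y : T) : nat :=
  index true [seq walk_len n x y | n <- iota 0 #|T|].

Variable r : T.

Definition depth (x : T) : nat := dist r x.

Definition child : rel T := fun a b => e a b && (depth b == (depth a).+1).

Definition leaf (x : T) : bool := [forall y, ~~ child x y].

Definition siblings (u v : T) : Prop :=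
  u != v /\ exists w, [/\ child w u & child w v].

(* the vertex set of a root-to-leaf path, given as r :: s *)
Definition root_leaf_path (s : seq T) : bool :=
  path child r s && leaf (last r s).

Definition independent (P Q : {set T}) : Prop :=
  ~ exists s, [/\ root_leaf_path s, has (mem P) (r :: s) & has (mem Q) (r :: s)].

Definition induced (V' : {set T}) : rel T :=
  fun a b => [&& a \in V', b \in V' & e a b].

Definition comp (V' : {set T}) (x : T) : {set T} :=
  [set y | connect (induced V') x y].

Definition components (V' : {set T}) : {set {set T}} :=
  [set comp V' x | x in V'].

Definition induces_downward_paths (V' : {set T}) : Prop :=
  forall C, C \in components V' ->
    exists x0 p, C = [set:: x0 :: p] /\ path child x0 p.

Definition starts_at (C : {set T}) (u : T) : Prop :=
  u \in C /\ forall y, y \in C -> depth u <= depth y.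

(* profile as a counting function: number of unordered pairs {x,y}
   of distinct vertices of V' at distance d *)
Definition profile (V' : {set T}) (d : nat) : nat :=
  #|[set S in powerset V' | (#|S| == 2) &&
      [exists x in S, exists y in S, (x != y) && (dist x y == d)]]|.

Definition homometric (V1 V2 : {set T}) : Prop :=
  [disjoint V1 & V2] /\ forall d, profile V1 d = profile V2 d.

End Tree.

(* Main.v *)
Require Import Defs.
From mathcomp Require Import all_boot zify.
Set Implicit Arguments. Unset Strict Implicit. Unset Printing Implicit Defensive.

Section Proof.
Variables (T : finType) (e : rel T) (r : T).
Hypothesis Ht : is_tree e.

Lemma esym : symmetric e. Proof. by case: Ht. Qed.
Lemma eirr : irreflexive e. Proof. by case: Ht. Qed.
Lemma econn : forall x y, connect e x y. Proof. by case: Ht. Qed.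
Lemma eacyc : forall c : seq T, ucycle e c -> size c <= 2. Proof. by case: Ht. Qed.

Lemma walk_lenP n x y :
  reflect (exists p, [/\ size p = n, path e x p & last x p = y]) (walk_len e n x y).
Proof.
apply: (iffP existsP) => [[t /andP [pt /eqP ly]] | [p [sp pp lp]]].
  by exists (val t); rewrite size_tuple.
have sp' : size p == n by apply/eqP.
by exists (Tuple sp'); rewrite /= pp lp eqxx.
Qed.

Lemma walk_cat m n x y z : walk_len e m x y -> walk_len e n y z -> walk_len e (m + n) x z.
Proof.
move=> /walk_lenP [p [sp pp lp]] /walk_lenP [q [sq pq lq]].
apply/walk_lenP; exists (p ++ q); rewrite size_cat cat_path last_cat lp pp pq sp sq.
by split.
Qed.

Lemma walk_rev n x y : walk_len e n x y -> walk_len e n y x.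
Proof.
move=> /walk_lenP [p [sp pp lp]]; apply/walk_lenP.
exists (rev (belast x p)); split.
- by rewrite size_rev size_belast.
- rewrite -lp rev_path; apply: sub_path pp => a b; by rewrite esym.
- case: p sp pp lp => [|a p] _ _ /= lp; first by rewrite lp.
  by rewrite rev_cons last_rcons.
Qed.

Lemma walk0 x y : walk_len e 0 x y -> x = y.
Proof. by case/walk_lenP => -[|? ?] [] //= _ _ ->. Qed.

Lemma walk0x x : walk_len e 0 x x.
Proof. by apply/walk_lenP; exists [::]. Qed.

Lemma walk1 x y : e x y -> walk_len e 1 x y.
Proof. by move=> exy; apply/walk_lenP; exists [:: y]; rewrite /= exy. Qed.

Lemma walk_ex x y : exists2 n, n < #|T| & walk_len e n x y.
Proof.
have /connectP [p pp lp] := econn x y.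
case/shortenP: pp lp => p' pp' up' _ lp'.
exists (size p'); last by apply/walk_lenP; exists p'.
have := max_card (mem (x :: p')); rewrite (card_uniqP up') /=.
done.
Qed.

Lemma dist_lt x y : dist e x y < #|T|.
Proof.
rewrite /dist; set s := map _ _.
have -> : #|T| = size s by rewrite size_map size_iota.
rewrite index_mem; case: (walk_ex x y) => n ltn wn.
by apply/mapP; exists n; rewrite ?mem_iota ?wn.
Qed.

Lemma dist_walk x y : walk_len e (dist e x y) x y.
Proof.
have hi := dist_lt x y; move: hi.
rewrite /dist; set s := map _ _ => hi.
have hm : true \in s.
  case: (walk_ex x y) => n ltn wn.
  by apply/mapP; exists n; rewrite ?mem_iota ?wn.
have := nth_index false hm.
by rewrite /s (nth_map 0) ?size_iota // nth_iota.
Qed.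

Lemma dist_min n x y : walk_len e n x y -> dist e x y <= n.
Proof.
move=> w; case: (ltnP n #|T|) => hn; last exact: ltnW (leq_trans (dist_lt x y) hn).
rewrite leqNgt; apply/negP => lt.
have := before_find (a := pred1 true) false lt.
by rewrite (nth_map 0) ?size_iota // nth_iota //= w.
Qed.

Lemma dist_sym x y : dist e x y = dist e y x.
Proof.
by apply/eqP; rewrite eqn_leq !dist_min // walk_rev // dist_walk.
Qed.

Lemma dist_tri x y z : dist e x z <= dist e x y + dist e y z.
Proof. by apply: dist_min; apply: walk_cat; apply: dist_walk. Qed.

Lemma dist_eq0 x y : dist e x y = 0 -> x = y.
Proof. by move=> h; have := dist_walk x y; rewrite h => /walk0. Qed.

Lemma dist_xx x : dist e x x = 0.
Proof. by apply/eqP; rewrite -leqn0 dist_min // walk0x. Qed.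

Lemma dist_edge x y : e x y -> dist e x y <= 1.
Proof. by move=> h; apply: dist_min; apply: walk1. Qed.

Local Notation dp := (depth e r).
Local Notation ch := (child e r).

Lemma dp_tri a b : dp b <= dp a + dist e a b.
Proof. exact: dist_tri. Qed.

Lemma dp_edge a b : e a b -> dp b <= (dp a).+1.
Proof. by move=> h; apply: leq_trans (dp_tri a b) _; rewrite -addn1 leq_add2l dist_edge. Qed.

Lemma dp_r : dp r = 0. Proof. exact: dist_xx. Qed.
Lemma dp0 x : dp x = 0 -> x = r. Proof. by move/dist_eq0. Qed.

Lemma parent_ex x : x != r -> exists2 p, e p x & (dp p).+1 = dp x.
Proof.
move=> xr; have := dist_walk r x; rewrite -/(depth e r x).
move/walk_lenP => [p [sp pp lp]].
case/lastP: p sp pp lp => [|q z] sp pp lp.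
  by move: lp => /= xr'; rewrite xr' eqxx in xr.
rewrite last_rcons in lp; subst z.
rewrite rcons_path in pp; case/andP: pp => pq ez.
exists (last r q) => //.
apply/eqP; rewrite eqn_leq dp_edge // andbT -sp size_rcons ltnS.
by apply: dist_min; apply/walk_lenP; exists q.
Qed.


Lemma noloop k : forall b c s, dp b = k -> dp c = k -> b != c -> path e b s ->
  last b s = c -> uniq (b :: s) -> all (fun z => k <= dp z) s -> False.
Proof.
elim: k => [|k IH] b c s db dc bc pbs lbs ubs als.
  by move: bc; rewrite (dp0 db) (dp0 dc) eqxx.
have br : b != r by apply/eqP => h; move: db; rewrite h dp_r.
have cr : c != r by apply/eqP => h; move: dc; rewrite h dp_r.
case: (parent_ex br) => b' eb' db'; case: (parent_ex cr) => c' ec' dc'.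
have {}db' : dp b' = k by move: db'; rewrite db => -[].
have {}dc' : dp c' = k by move: dc'; rewrite dc => -[].
have Hs : forall z, z \in s -> k < dp z by move=> z zs; exact: (allP als z zs).
have b'b : b' != b by apply/eqP => h; move: db; rewrite -h db'; lia.
have b's : b' \notin s by apply/negP => /Hs; rewrite db' ltnn.
have c's : c' \notin s by apply/negP => /Hs; rewrite dc' ltnn.
have bc' : b != c' by apply/eqP => h; move: db; rewrite h dc'; lia.
move: ubs; rewrite cons_uniq => /andP [bs us].
case: (eqVneq b' c') => [eq|ne].
  subst c'.
  have : ucycle e (b' :: b :: s).
    rewrite /ucycle /= rcons_path eb' pbs lbs esym ec' /=.
    by rewrite in_cons negb_or b'b b's bs us.
  move/eacyc; case: s {pbs als Hs b's c's bs us} lbs => [|x s] //= lbs.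
  by rewrite lbs eqxx in bc.
apply: (IH b' c' (b :: rcons s c')) => //=.
- by rewrite eb' rcons_path pbs lbs esym ec'.
- by rewrite last_rcons.
- rewrite in_cons mem_rcons in_cons negb_or b'b /= negb_or ne b's /=.
  by rewrite mem_rcons in_cons negb_or bc' bs rcons_uniq c's us.
- rewrite db leqnSn all_rcons dc' leqnn /=.
  by apply/allP => z /Hs /ltnW.
Qed.

Lemma edge_neq a b : e a b -> dp a != dp b.
Proof.
move=> eab; apply/negP => /eqP dab.
have ab : a != b by apply: contraTneq eab => ->; rewrite eirr.
apply: (noloop (k:=dp a) (b:=a) (c:=b) (s:=[:: b])) => //=.
- by rewrite eab.
- by rewrite in_cons orbF ab.
- by rewrite dab leqnn.
Qed.

Lemma uniq_parent a b c : e b a -> e c a -> (dp b).+1 = dp a -> (dp c).+1 = dp a -> b = c.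
Proof.
move=> eba eca db dc; apply/eqP/negP => /negP bc.
apply: (noloop (k:=dp b) (b:=b) (c:=c) (s:=[:: a; c])) => //=.
- by move: db dc => <- [].
- by rewrite eba esym eca.
- rewrite !in_cons !orbF negb_or bc !andbT; apply/andP; split.
    by apply/eqP => h; move: db; rewrite h; lia.
  by apply/eqP => h; move: dc; rewrite h; lia.
- rewrite -db leqnSn /=; lia.
Qed.

Lemma dp_edge2 a b : e a b -> dp b = (dp a).+1 \/ dp a = (dp b).+1.
Proof.
move=> eab; have h1 := dp_edge eab.
have h2 : dp a <= (dp b).+1 by apply: dp_edge; rewrite esym.
have := edge_neq eab; lia.
Qed.

Lemma conn_last u a : connect ch u a -> a != u -> exists2 a', connect ch u a' & ch a' a.
Proof.
move=> /connectP [p pp lp] au.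
case/lastP: p pp lp => [|q z] pp lp; first by rewrite lp eqxx in au.
rewrite last_rcons in lp; subst z; rewrite rcons_path in pp; case/andP: pp => pq cq.
by exists (last u q) => //; apply/connectP; exists q.
Qed.

Lemma bound u a b : e a b -> connect ch u a -> ~~ connect ch u b ->
  a = u /\ (dp b).+1 = dp a.
Proof.
move=> eab cua ncub.
case: (dp_edge2 eab) => hd.
  case/negP: ncub; apply: connect_trans cua (connect1 _).
  by rewrite /child eab hd eqxx.
split => //; case: (eqVneq a u) => // au.
case: (conn_last cua au) => a' cua' /andP [ea'a /eqP da'].
have ab : a' = b by apply: (uniq_parent ea'a) => //; rewrite esym.
by rewrite -ab cua' in ncub.
Qed.

Lemma cut_split u w (ewu : e w u) (dwu : (dp w).+1 = dp u) : forall p x,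
  path e x p -> connect ch u x -> ~~ connect ch u (last x p) ->
  exists q1 q2, p = q1 ++ w :: q2 /\ last x q1 = u.
Proof.
elim=> [|z p IH] x /=; first by move=> _ ->.
case/andP=> exz pzp cux ncu.
case: (boolP (connect ch u z)) => cuz.
  case: (IH z pzp cuz ncu) => q1 [q2 [-> lq]].
  by exists (z :: q1), q2.
case: (bound exz cux cuz) => xu dz; subst x.
have zw : z = w by apply: (uniq_parent (a:=u)) => //; rewrite esym.
by exists [::], p; rewrite zw.
Qed.

Lemma cut_dist u w x y : e w u -> (dp w).+1 = dp u -> connect ch u x -> ~~ connect ch u y ->
  dist e x y = dist e x u + (dist e w y).+1.
Proof.
move=> ewu dwu cux ncuy; apply/eqP; rewrite eqn_leq; apply/andP; split.
  apply: leq_trans (dist_tri x u y) _; rewrite leq_add2l.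
  apply: leq_trans (dist_tri u w y) _.
  have : dist e u w <= 1 by apply: dist_edge; rewrite esym.
  lia.
have := dist_walk x y; case/walk_lenP => p [sp pp lp].
rewrite -lp in ncuy; case: (cut_split ewu dwu pp cux ncuy) => q1 [q2 [pq lq]].
rewrite pq cat_path lq /= in pp; case/and3P: pp => pq1 _ pq2.
have h1 : dist e x u <= size q1 by apply: dist_min; apply/walk_lenP; exists q1.
have h2 : dist e w y <= size q2.
  apply: dist_min; apply/walk_lenP; exists q2; split => //.
  by rewrite -lp pq last_cat lq.
rewrite -sp pq size_cat /=; lia.
Qed.

Lemma path_ch_dp p a : path ch a p -> dp (last a p) = dp a + size p.
Proof.
elim: p a => [|z p IH] a /=; first by rewrite addn0.
by case/andP => /andP [_ /eqP dz] /IH ->; rewrite dz addnS.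
Qed.

Lemma ch_e : subrel ch e. Proof. by move=> a b /andP []. Qed.

Lemma conn_dist a b : connect ch a b -> dp b = dp a + dist e a b.
Proof.
case/connectP => p pp ->; rewrite path_ch_dp //.
have h1 : dist e a (last a p) <= size p.
  by apply: dist_min; apply/walk_lenP; exists p; split => //; move: pp; apply: sub_path => x y /andP [].
have h2 := dp_tri a (last a p); rewrite path_ch_dp // in h2.
congr (_ + _); apply/eqP; rewrite eqn_leq h1 /=; lia.
Qed.

Lemma conn_le a b : connect ch a b -> dp a <= dp b.
Proof. by move/conn_dist ->; rewrite leq_addr. Qed.

Lemma conn_eq a b : connect ch a b -> dp a = dp b -> a = b.
Proof. by move/conn_dist => -> /eqP; rewrite -{1}[dp a]addn0 eqn_add2l eq_sym => /eqP/dist_eq0. Qed.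


Definition chain (C : {set T}) u := exists p, C = [set:: u :: p] /\ path ch u p.

Lemma path_ch_gt x p : path ch x p -> forall z, z \in p -> dp x < dp z.
Proof.
elim: p x => [|a p IH] x //= /andP [/andP [_ /eqP da] pp] z.
rewrite in_cons => /orP [/eqP -> | zp]; first by rewrite da.
by apply: ltn_trans (IH _ pp _ zp); rewrite da.
Qed.

Lemma chain_conn x p : path ch x p -> forall y z, y \in x :: p -> z \in x :: p ->
  dp y <= dp z -> connect ch y z.
Proof.
elim: p x => [|a p IH] x /=.
  by move=> _ y z; rewrite !in_cons !orbF => /eqP -> /eqP ->.
case/andP => cxa pp y z; rewrite in_cons => /orP [/eqP -> | ya].
  rewrite in_cons => /orP [/eqP -> _ | za] //.
  move=> _; apply: connect_trans (connect1 cxa) (IH _ pp _ _ _ za _) => //.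
    by rewrite mem_head.
  move: za; rewrite in_cons => /orP [/eqP -> //| /(path_ch_gt pp) /ltnW //].
rewrite in_cons => /orP [/eqP -> | za]; last exact: (IH a pp y z ya za).
have : dp a <= dp y.
  by move: ya; rewrite in_cons => /orP [/eqP -> //| /(path_ch_gt pp) /ltnW //].
move: cxa => /andP [_ /eqP ->]; lia.
Qed.

Lemma nth_dp x p d : path ch x p -> forall i, i <= size p -> dp (nth d (x :: p) i) = dp x + i.
Proof.
elim: p x => [|a p IH] x /=.
  by move=> _ [|i] //; rewrite addn0.
case/andP => /andP [_ /eqP da] pp [|i] //=; first by rewrite addn0.
by rewrite ltnS => /(IH _ pp) ->; rewrite da addnS.
Qed.

Lemma path_ch_uniq x p : path ch x p -> uniq (x :: p).
Proof.
elim: p x => [|a p IH] x //= /andP [cxa pp].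
have := IH _ pp; rewrite /= => ->; rewrite andbT.
apply/negP => /(path_ch_gt (x := x)) /=; rewrite cxa pp => /(_ isT).
by rewrite ltnn.
Qed.

Lemma mem_ss (s : seq T) y : (y \in [set:: s]) = (y \in s).
Proof. by rewrite in_set. Qed.

Section Chain.
Variables (C : {set T}) (u : T).
Hypothesis chC : chain C u.

Lemma c1 : u \in C.
Proof. by case: chC => p [-> _]; rewrite mem_ss mem_head. Qed.

Lemma c2 y : y \in C -> connect ch u y.
Proof.
case: chC => p [-> pp]; rewrite mem_ss => yC.
apply: (chain_conn pp) => //; first by rewrite mem_head.
move: yC; rewrite in_cons => /orP [/eqP -> //| /(path_ch_gt pp) /ltnW //].
Qed.

Lemma c3 y z : y \in C -> z \in C -> dp y = dp z -> y = z.
Proof.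
case: chC => p [-> pp]; rewrite !mem_ss => yC zC dyz.
exact: (conn_eq (chain_conn pp yC zC (eq_leq dyz)) dyz).
Qed.

Lemma cardC : exists2 p, path ch u p & #|C| = (size p).+1.
Proof.
case: chC => p [-> pp]; exists p => //.
by rewrite cardsE; apply/card_uniqP; exact: path_ch_uniq.
Qed.



Lemma c4 y : y \in C -> dp y < dp u + #|C|.
Proof.
case: chC => p [Ce pp]; rewrite Ce mem_ss => yC.
rewrite cardsE (card_uniqP (path_ch_uniq pp)).
rewrite -(nth_index u yC) (nth_dp u pp).
  by rewrite ltn_add2l index_mem.
by rewrite -ltnS -[(size p).+1]/(size (u :: p)) index_mem.
Qed.

Lemma c5 d : dp u <= d -> d < dp u + #|C| -> exists2 y, y \in C & dp y = d.
Proof.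
case: chC => p [Ce pp]; rewrite Ce cardsE (card_uniqP (path_ch_uniq pp)) /= => h1 h2.
exists (nth u (u :: p) (d - dp u)).
  by rewrite mem_ss mem_nth //= ltnS; lia.
by rewrite (nth_dp u pp); lia.
Qed.

Lemma c6 y z : y \in C -> z \in C -> dist e y z = (dp y - dp z) + (dp z - dp y).
Proof.
case: chC => p [Ce pp]; rewrite Ce !mem_ss => yC zC.
case: (leqP (dp y) (dp z)) => h.
  have := conn_dist (chain_conn pp yC zC h); lia.
rewrite dist_sym.
have := conn_dist (chain_conn pp zC yC (ltnW h)); lia.
Qed.

End Chain.

Lemma conn_root n z : dp z <= n -> connect ch r z.
Proof.
elim: n z => [|n IH] z.
  by rewrite leqn0 => /eqP /dp0 ->; exact: connect0.
move=> hz; case: (eqVneq z r) => [-> |zr]; first exact: connect0.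
case: (parent_ex zr) => p epz dpz.
apply: connect_trans (IH p _) (connect1 _); first lia.
by rewrite /child epz dpz eqxx.
Qed.

Lemma to_leaf n z : #|T| - dp z <= n -> exists2 l, connect ch z l & leaf e r l.
Proof.
elim: n z => [|n IH] z hz.
  have := dist_lt r z; rewrite -/(depth e r z); lia.
case: (boolP (leaf e r z)) => [lz|]; first by exists z => //; exact: connect0.
move/forallPn => [y /negPn czy].
have dy : dp y = (dp z).+1 by case/andP: czy => _ /eqP.
have := dist_lt r y; rewrite -/(depth e r y) => hy.
case: (IH y); first lia.
by move=> l cyl ll; exists l => //; apply: connect_trans (connect1 czy) cyl.
Qed.

Lemma RL a b : connect ch a b ->
  exists s, [/\ root_leaf_path e r s, a \in r :: s & b \in r :: s].
Proof.
move=> cab.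
have /connectP [p1 pp1 l1] := conn_root (leqnn (dp a)).
have /connectP [p2 pp2 l2] := cab.
have [l cbl ll] := to_leaf (leqnn (#|T| - dp b)).
have /connectP [p3 pp3 l3] := cbl.
exists (p1 ++ p2 ++ p3); split.
- rewrite /root_leaf_path !cat_path !last_cat -l1 pp1 pp2 -l2 pp3 /=.
  by rewrite -l3.
- by rewrite -cat_cons mem_cat l1 mem_last.
- by rewrite catA -cat_cons mem_cat l2 l1 -last_cat mem_last.
Qed.

Lemma indepF P Q a b : independent e r P Q -> a \in P -> b \in Q -> connect ch a b -> False.
Proof.
move=> ind aP bQ /RL [s [rs aS bS]]; apply: ind; exists s; split => //.
  by apply/hasP; exists a.
by apply/hasP; exists b.
Qed.


Section Main.
Variables (V1 V2 : {set T}) (f : {set T} -> {set T}).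
Hypotheses (Hcard : #|V1| = #|V2|)
  (Hd1 : induces_downward_paths e r V1) (Hd2 : induces_downward_paths e r V2)
  (Hinj : {in components e V1 &, injective f})
  (Him : f @: components e V1 = components e V2)
  (Hf : forall C, C \in components e V1 ->
     #|f C| = #|C| /\
     exists u v, [/\ starts_at e r C u, starts_at e r (f C) v & siblings e r u v])
  (Hind : forall P Q, P \in components e V1 :|: components e V2 ->
               Q \in components e V1 :|: components e V2 ->
               P != Q -> independent e r P Q).

Local Notation K1 := (components e V1).
Local Notation K2 := (components e V2).

Lemma comp_sub (V C : {set T}) : C \in components e V -> C \subset V.
Proof.
case/imsetP => x xV ->; apply/subsetP => y; rewrite inE => /connectP [p pp ->].
case/lastP: p pp => [|q z] //= pp.
rewrite last_rcons; move: pp; rewrite rcons_path => /andP [_ /and3P [_ zV _]].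
exact zV.
Qed.

Lemma comp_in (V : {set T}) (x : T) : x \in V -> Defs.comp e V x \in components e V /\ x \in Defs.comp e V x.
Proof. by move=> xV; split; [apply: imset_f | rewrite inE connect0]. Qed.

Lemma chain_of_comp (V : {set T}) (Hd : induces_downward_paths e r V) C u :
  C \in components e V -> starts_at e r C u -> chain C u.
Proof.
move=> CK [uC hu]; have [x0 [p [Ce pp]]] := Hd _ CK.
have ch0 : chain C x0 by exists p.
have h1 := hu x0 (c1 ch0).
have h2 := conn_le (c2 ch0 uC).
have -> : u = x0 by apply: (c3 ch0 uC (c1 ch0)); lia.
exact ch0.
Qed.

Lemma fK C : C \in K1 -> f C \in K2.
Proof. by rewrite -Him; apply: imset_f. Qed.

Lemma data C : C \in K1 -> exists u v w,
  [/\ chain C u, chain (f C) v, ch w u, ch w v & #|f C| = #|C|].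
Proof.
move=> CK; have [cc [u [v [su sv [_ [w [cwu cwv]]]]]]] := Hf CK.
exists u, v, w; split => //.
  exact (chain_of_comp Hd1 CK su).
exact (chain_of_comp Hd2 (fK CK) sv).
Qed.

Lemma U1 C : C \in K1 -> C \in K1 :|: K2. Proof. by move=> h; rewrite in_setU h. Qed.
Lemma U2 C : C \in K2 -> C \in K1 :|: K2. Proof. by move=> h; rewrite in_setU h orbT. Qed.

Lemma U_same P Q a b : P \in K1 :|: K2 -> Q \in K1 :|: K2 -> a \in P -> b \in Q ->
  connect ch a b -> P = Q.
Proof.
move=> PU QU aP bQ cab; case: (eqVneq P Q) => // PQ.
by case: (indepF (Hind PU QU PQ) aP bQ cab).
Qed.

Lemma cross P Q u u' w w' x y : P \in K1 :|: K2 -> Q \in K1 :|: K2 -> P != Q ->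
  chain P u -> chain Q u' -> ch w u -> ch w' u' -> x \in P -> y \in Q ->
  dist e x y = (dp x - dp u) + (dp y - dp u') + 2 + dist e w w'.
Proof.
move=> PU QU PQ chP chQ /andP [ewu /eqP dwu] /andP [ew'u' /eqP dw'u'] xP yQ.
have cux := c2 chP xP. have cuy := c2 chQ yQ.
have ncuy : ~~ connect ch u y.
  by apply/negP => h; move: PQ; rewrite (U_same PU QU (c1 chP) yQ h) eqxx.
have ncuw : ~~ connect ch u' w.
  apply/negP => h.
  have cu'u : connect ch u' u.
    by apply: connect_trans h (connect1 _); rewrite /child ewu dwu eqxx.
  by move: PQ; rewrite (U_same QU PU (c1 chQ) (c1 chP) cu'u) eqxx.
rewrite (cut_dist ewu _ cux ncuy); last by rewrite dwu.
rewrite (dist_sym w y) (cut_dist ew'u' _ cuy ncuw); last by rewrite dw'u'.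
rewrite (dist_sym x u) (dist_sym w' w) (dist_sym y u').
have := conn_dist cux; have := conn_dist cuy; lia.
Qed.

Definition phi x := odflt x [pick y in f (Defs.comp e V1 x) | dp y == dp x].

Lemma phi_spec x : x \in V1 -> phi x \in f (Defs.comp e V1 x) /\ dp (phi x) = dp x.
Proof.
move=> xV; have [CK xC] := comp_in xV.
have [u [v [w [chC chf cwu cwv cc]]]] := data CK.
rewrite /phi; case: pickP => [y /andP [yf /eqP dy] | none] //=.
exfalso.
have duv : dp u = dp v by move: cwu cwv => /andP [_ /eqP ->] /andP [_ /eqP ->].
have h1 := conn_le (c2 chC xC).
have h2 := c4 chC xC.
have [y yf dy] := c5 chf (d := dp x) ltac:(lia) ltac:(lia).
by have := none y; rewrite yf dy eqxx.
Qed.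

Lemma phi_V2 x : x \in V1 -> phi x \in V2.
Proof.
move=> xV; have [h _] := phi_spec xV; have [CK _] := comp_in xV.
exact: (subsetP (comp_sub (fK CK))) _ h.
Qed.

Lemma phi_inj : {in V1 &, injective phi}.
Proof.
move=> x y xV yV eq.
have [hx dx] := phi_spec xV; have [hy dy] := phi_spec yV.
have [CxK xC] := comp_in xV; have [CyK yC] := comp_in yV.
have e1 : f (Defs.comp e V1 x) = f (Defs.comp e V1 y).
  have hy' : phi x \in f (Defs.comp e V1 y) by rewrite eq.
  exact: (U_same (U2 (fK CxK)) (U2 (fK CyK)) hx hy' (connect0 _ _)).
have e2 := Hinj CxK CyK e1.
have [u [v [w [chC _ _ _ _]]]] := data CxK.
apply: (c3 chC xC); first by rewrite e2.
by rewrite -dx eq dy.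
Qed.

Lemma phi_dist x y : x \in V1 -> y \in V1 -> dist e (phi x) (phi y) = dist e x y.
Proof.
move=> xV yV.
have [hx dx] := phi_spec xV; have [hy dy] := phi_spec yV.
have [CxK xC] := comp_in xV; have [CyK yC] := comp_in yV.
have [u [v [w [chC chfC cwu cwv _]]]] := data CxK.
have [u' [v' [w' [chC' chfC' cwu' cwv' _]]]] := data CyK.
case: (eqVneq (Defs.comp e V1 x) (Defs.comp e V1 y)) => [eq|ne].
  rewrite -eq in yC hy.
  by rewrite (c6 chfC hx hy) (c6 chC xC yC) dx dy.
have fne : f (Defs.comp e V1 x) != f (Defs.comp e V1 y).
  by apply: contra ne => /eqP /(Hinj CxK CyK) ->.
rewrite (cross (U1 CxK) (U1 CyK) ne chC chC' cwu cwu' xC yC).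
rewrite (cross (U2 (fK CxK)) (U2 (fK CyK)) fne chfC chfC' cwv cwv' hx hy).
rewrite dx dy.
by move: cwu cwv cwu' cwv' => /andP[_ /eqP ->] /andP[_ /eqP ->] /andP[_ /eqP ->] /andP[_ /eqP ->].
Qed.

Lemma phi_im : phi @: V1 = V2.
Proof.
apply/eqP; rewrite eqEcard; apply/andP; split.
  by apply/subsetP => z /imsetP [x xV ->]; exact: phi_V2.
by rewrite card_in_imset ?Hcard //; exact: phi_inj.
Qed.

Lemma imsetK_sub (S S' : {set T}) : S \subset V1 -> S' \subset V1 -> phi @: S \subset phi @: S' -> S \subset S'.
Proof.
move=> sS sS' sub; apply/subsetP => x xS.
have /imsetP [x' x'S' eq] := subsetP sub _ (imset_f phi xS).
by rewrite (phi_inj (subsetP sS _ xS) (subsetP sS' _ x'S') eq).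
Qed.

Lemma prof d : profile e V1 d = profile e V2 d.
Proof.
pose A (V : {set T}) := [set S in powerset V | (#|S| == 2) &&
      [exists x in S, exists y in S, (x != y) && (dist e x y == d)]].
change (#|A V1| = #|A V2|).
have inA (V S : {set T}) : (S \in A V) = [&& S \subset V, #|S| == 2 &
    [exists x in S, exists y in S, (x != y) && (dist e x y == d)]].
  by rewrite inE powersetE.
have -> : A V2 = (fun S : {set T} => phi @: S) @: A V1.
  apply/setP => S; apply/idP/imsetP.
  - rewrite inA => /and3P [sV2 c2 /existsP [a /andP [aS /existsP [b /andP [bS /andP [ab dab]]]]]].
    pose S1 := [set x in V1 | phi x \in S].
    have eS : phi @: S1 = S.
      apply/setP => z; apply/imsetP/idP => [[x] | zS].
        by rewrite inE => /andP [_ ?] ->.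
      have : z \in phi @: V1 by rewrite phi_im (subsetP sV2).
      by case/imsetP => x xV zx; exists x => //; rewrite inE xV -zx.
    have sS1 : S1 \subset V1 by apply/subsetP => x; rewrite inE => /andP [].
    have inj1 : {in S1 &, injective phi}.
      by move=> x y /(subsetP sS1) xV /(subsetP sS1) yV; exact: phi_inj.
    exists S1; last by rewrite eS.
    rewrite inA sS1 -(card_in_imset inj1) eS c2 /=.
    move: aS bS ab dab; rewrite -eS => /imsetP [x1 x1S ->] /imsetP [y1 y1S ->] ab dab.
    apply/existsP; exists x1; rewrite x1S /=; apply/existsP; exists y1; rewrite y1S /=.
    rewrite -(phi_dist (subsetP sS1 _ x1S) (subsetP sS1 _ y1S)) dab andbT.
    by apply: contra ab => /eqP ->.
  - case=> S1 S1A ->; move: S1A; rewrite !inA.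
    case/and3P => sV1 c2 /existsP [a /andP [aS /existsP [b /andP [bS /andP [ab dab]]]]].
    have inj1 : {in S1 &, injective phi}.
      by move=> x y /(subsetP sV1) xV /(subsetP sV1) yV; exact: phi_inj.
    rewrite (card_in_imset inj1) c2 /=; apply/andP; split.
      by apply/subsetP => z /imsetP [x /(subsetP sV1) xV ->]; exact: phi_V2.
    apply/existsP; exists (phi a); rewrite imset_f //=.
    apply/existsP; exists (phi b); rewrite imset_f //=.
    rewrite (phi_dist (subsetP sV1 _ aS) (subsetP sV1 _ bS)) dab andbT.
    by apply: contra ab => /eqP /(phi_inj (subsetP sV1 _ aS) (subsetP sV1 _ bS)) ->.
rewrite card_in_imset; first by [].
move=> S S' SA S'A eq.
move: SA S'A; rewrite !inA => /andP [sS _] /andP [sS' _].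
apply/eqP; rewrite eqEsubset; apply/andP; split.
  by apply: imsetK_sub sS sS' _; rewrite eq subxx.
by apply: imsetK_sub sS' sS _; rewrite eq subxx.
Qed.

End Main.
End Proof.

Theorem mainTheorem3 (T : finType) (e : rel T) (r : T) (V1 V2 : {set T})
  (f : {set T} -> {set T}) :
  is_tree e ->
  [disjoint V1 & V2] ->
  #|V1| = #|V2| ->
  induces_downward_paths e r V1 ->
  induces_downward_paths e r V2 ->
  {in components e V1 &, injective f} ->
  f @: components e V1 = components e V2 ->
  (forall C, C \in components e V1 ->
     #|f C| = #|C| /\
     exists u v, [/\ starts_at e r C u, starts_at e r (f C) v & siblings e r u v]) ->
  (forall P Q, P \in components e V1 :|: components e V2 ->
               Q \in components e V1 :|: components e V2 ->
               P != Q -> independent e r P Q) ->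
  homometric e V1 V2.
Proof.
move=> Ht Hdis Hcard Hd1 Hd2 Hinj Him Hf Hind; split => // d.
exact: (prof Ht Hcard Hd1 Hd2 Hinj Him Hf Hind).
Qed.
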